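(* For every positive integer $n$ with $n\ne2,6$, there exist a $(2,3,n)$-AONT and a $(1,3,n)$-AONT.
   Context: Let $X$ be a finite alphabet with $|X|=v$ and $0\le t\le s$. A $(t,s,v)$-AONT is a bijection $\phi:X^s\to X^s$ such that for every $I\subseteq\{1,\dots,s\}$ with $|I|=t$ and every $J\subseteq\{1,\dots,s\}$ with $|J|=s-t$, the map $x\mapsto\big((x_i)_{i\in I},(\phi(x)_j)_{j\in J}\big)$ is a bijection $X^s\to X^t\times X^{s-t}$. *)

(* Defs.v *)
From mathcomp Require Import all_boot.
Set Implicit Arguments. Unset Strict Implicit. Unset Printing Implicit Defensive.

(* Words of length s over alphabet X: X^s as finite functions 'I_s -> X,
   coordinates indexed 0..s-1 (paper: 1..s). *)
Definition word (X : finType) (s : nat) := {ffun 'I_s -> X}.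

Definition restr (X : finType) (s : nat) (I : {set 'I_s}) (x : word X s)
  : {ffun {i : 'I_s | i \in I} -> X} :=
  [ffun i => x (val i)].

Definition is_AONT (X : finType) (t s : nat) (phi : word X s -> word X s) : Prop :=
  t <= s /\ bijective phi /\
  forall I J : {set 'I_s}, #|I| = t -> #|J| = s - t ->
    bijective (fun x : word X s => (restr I x, restr J (phi x))).

Definition AONT_exists (t s v : nat) : Prop :=
  exists (X : finType) (phi : word X s -> word X s), #|X| = v /\ is_AONT t phi.

(* Main.v *)
Require Import Defs.
From mathcomp Require Import all_boot.
From mathcomp Require Import all_algebra all_field.
From mathcomp Require Import ring.

Lemma aont_crit (X : finType) t s (phi : word X s -> word X s) :
  t <= s -> injective phi ->
  (forall I J : {set 'I_s}, #|I| = t -> #|J| = s - t -> forall x x' : word X s,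
     (forall i, i \in I -> x i = x' i) ->
     (forall j, j \in J -> phi x j = phi x' j) -> x = x') ->
  is_AONT t phi.
Proof.
move=> hts hinj H; split=> //; split; first exact: injF_bij.
move=> I J hI hJ; apply: inj_card_bij.
- move=> x x' /= [/ffunP e1 /ffunP e2]; apply: (H I J hI hJ) => [i iI|j jJ].
  + by have := e1 (exist _ i iI); rewrite !ffunE.
  + by have := e2 (exist _ j jJ); rewrite !ffunE.
- rewrite card_prod /= !card_ffun !card_sig card_ord.
  have e : forall A : {set 'I_s}, #|[pred x | x \in A]| = #|A| by move=> A; apply: eq_card.
  by rewrite !e hI hJ -expnD subnKC.
Qed.

Definition latin3 {T : Type} (f : T -> T -> T -> T) :=
  [/\ forall a a' b c, f a b c = f a' b c -> a = a',
      forall a b b' c, f a b c = f a b' c -> b = b' &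
      forall a b c c', f a b c = f a b c' -> c = c'].

Definition inj3 {T : Type} (f g h : T -> T -> T -> T) :=
  forall a b c a' b' c', f a b c = f a' b' c' -> g a b c = g a' b' c' ->
    h a b c = h a' b' c' -> [/\ a = a', b = b' & c = c'].

Definition i0 : 'I_3 := @Ordinal 3 0 isT.
Definition i1 : 'I_3 := @Ordinal 3 1 isT.
Definition i2 : 'I_3 := @Ordinal 3 2 isT.

Lemma ord3_cases (k : 'I_3) : k = i0 \/ k = i1 \/ k = i2.
Proof.
case: k => [[|[|[|k]]] Hk] //.
- by left; apply: val_inj.
- by right; left; apply: val_inj.
- by right; right; apply: val_inj.
Qed.

Definition phi3 {X : finType} (f g h : X -> X -> X -> X) (x : word X 3) : word X 3 :=
  [ffun j : 'I_3 => if val j == 0 then f (x i0) (x i1) (x i2)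
                    else if val j == 1 then g (x i0) (x i1) (x i2)
                    else h (x i0) (x i1) (x i2)].

Lemma aont23 (X : finType) (f g h : X -> X -> X -> X) :
  latin3 f -> latin3 g -> latin3 h -> inj3 f g h -> AONT_exists 2 3 #|X|.
Proof.
move=> [f1 f2 f3] [g1 g2 g3] [h1 h2 h3] hi.
exists X, (phi3 f g h); split=> //; apply: aont_crit => //.
- move=> x x' e.
  have e0 := congr1 (fun w : word X 3 => w i0) e.
  have e1 := congr1 (fun w : word X 3 => w i1) e.
  have e2 := congr1 (fun w : word X 3 => w i2) e.
  rewrite /= !ffunE /= in e0 e1 e2.
  have [E0 E1 E2] := hi _ _ _ _ _ _ e0 e1 e2.
  by apply/ffunP => k; case: (ord3_cases k) => [->|[->|->]].
- move=> I J hI hJ x x' hx hy.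
  have : #|~: I| = 1 by have := cardsC I; rewrite card_ord hI => /eqP; rewrite -/(2 + 1) eqn_add2l => /eqP.
  move=> /eqP /cards1P [k hk].
  move: hJ => /= /eqP /cards1P [j hj].
  have hxi : forall i, i != k -> x i = x' i.
    move=> i ik; apply: hx.
    have : i \notin ~: I by rewrite hk in_set1.
    by rewrite in_setC negbK.
  have hyj : phi3 f g h x j = phi3 f g h x' j by apply: hy; rewrite hj set11.
  suff hk' : x k = x' k.
    by apply/ffunP => i; case: (eqVneq i k) => [->|] //; exact: hxi.
  case: (ord3_cases k) => [E|[E|E]]; subst k;
  case: (ord3_cases j) => [E|[E|E]]; subst j;
  rewrite !ffunE /= in hyj;
  first [ rewrite (hxi i1 isT) (hxi i2 isT) in hyj
        | rewrite (hxi i0 isT) (hxi i2 isT) in hyj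
        | rewrite (hxi i0 isT) (hxi i1 isT) in hyj ];
  first [ exact: f1 hyj | exact: f2 hyj | exact: f3 hyj
        | exact: g1 hyj | exact: g2 hyj | exact: g3 hyj
        | exact: h1 hyj | exact: h2 hyj | exact: h3 hyj ].
Qed.

Lemma aont_inv n : AONT_exists 2 3 n -> AONT_exists 1 3 n.
Proof.
move=> [X [phi [hX [_ [hb H]]]]].
case: hb => g gK Kg.
exists X, g; split=> //; apply: aont_crit => //; first exact: can_inj Kg.
move=> I J hI hJ x x' hx hy.
have : g x = g x'.
  apply: (bij_inj (H J I hJ hI)) => /=; congr pair; apply/ffunP => i; rewrite !ffunE.
  - exact: hy (valP i).
  - by rewrite !Kg; apply: hx (valP i).
by move/(congr1 phi); rewrite !Kg.
Qed.

Lemma aont_one : AONT_exists 2 3 1.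
Proof.
have H := @aont23 unit (fun _ _ _ => tt) (fun _ _ _ => tt) (fun _ _ _ => tt).
rewrite card_unit in H; apply: H.
- by split=> [[] [] | ? [] [] | ? ? [] []].
- by split=> [[] [] | ? [] [] | ? ? [] []].
- by split=> [[] [] | ? [] [] | ? ? [] []].
- by move=> [] [] [] [] [] [].
Qed.

Section Linear.
Import GRing.Theory.
Local Open Scope ring_scope.

Lemma lin_aont (R : comUnitRingType) (t : R) :
  t \is a GRing.unit -> (t - 1) \is a GRing.unit ->
  let f0 := fun a b c : R => a + b + c in
  let f1 := fun a b c : R => a + t * b + c in
  let f2 := fun a b c : R => a + b + t * c in
  [/\ latin3 f0, latin3 f1, latin3 f2 & inj3 f0 f1 f2].
Proof.
move=> tU t1U f0 f1 f2; split.
- split=> [a a' b c|a b b' c|a b c c'] /=.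
  + by move/addIr/addIr.
  + by move/addIr/addrI.
  + by move/addrI.
- split=> [a a' b c|a b b' c|a b c c'] /=.
  + by move/addIr/addIr.
  + by move/addIr/addrI/(mulrI tU).
  + by move/addrI.
- split=> [a a' b c|a b b' c|a b c c'] /=.
  + by move/addIr/addIr.
  + by move/addIr/addrI.
  + by move/addrI/(mulrI tU).
- move=> a b c a' b' c' e0 e1 e2; rewrite /f0 /f1 /f2 in e0 e1 e2 *.
  have eb : (t - 1) * b = (t - 1) * b'.
    transitivity ((a + t * b + c) - (a + b + c)); first by ring.
    by rewrite e1 e0; ring.
  have ec : (t - 1) * c = (t - 1) * c'.
    transitivity ((a + b + t * c) - (a + b + c)); first by ring.
    by rewrite e2 e0; ring.
  move/(mulrI t1U): eb => eb; move/(mulrI t1U): ec => ec.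
  subst b' c'; split=> //.
  by move/addIr/addIr: e0.
Qed.

End Linear.

Section Twisted.
Import GRing.Theory.
Local Open Scope ring_scope.
Variable p : nat.
Hypothesis podd : odd p.+3.
Notation Zm := ('Z_(p.+3)).
Lemma step (y : Zm) : ((val (y + 1) == 0%N) && (val y == p.+2)) || (val (y + 1) == (val y).+1).
Proof.
rewrite /= (@modn_small 1 p.+3) // addn1.
have := ltn_ord y; rewrite leq_eqVlt => /orP [/eqP e | lt].
- have ey : nat_of_ord y = p.+2 by move: e => /= [].
  by rewrite e modnn ey !eqxx.
- by rewrite modn_small // eqxx orbT.
Qed.

Definition sel (c : nat) (v0 v1 v2 : bool) := if c is 0%N then v0 else if c is 1%N then v1 else v2.

Definition key_ok (o0 o1 o2 z0 z1 z2 a0 a1 a2 a0' a1' a2' : bool) :=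
  let g0 := fun c => sel c (o0 (+) z0) (o1 (+) z1) (o2 (+) z2) in
  let g1 := fun c => sel c o0 o1 o2 in
  let g2 := fun c => sel c z0 z1 z2 in
  [&& (z0 ==> ~~ o0), (z1 ==> ~~ o1), (z2 ==> ~~ o2),
      (z1 ==> ~~ o0), (z2 ==> ~~ o1),
      (z1 || (o1 == ~~ o0)), (z2 || (o2 == ~~ o1)),
      ~~ (z0 && z1), ~~ (z1 && z2) & ~~ (z0 && z2)] ==>
  (a0 (+) a1 (+) a2 (+) g0 (a1 + a2)%N == a0' (+) a1' (+) a2' (+) g0 (a1' + a2')%N) ==>
  (a1 (+) a2 (+) a0 (+) g1 (a2 + a0)%N == a1' (+) a2' (+) a0' (+) g1 (a2' + a0')%N) ==>
  (a2 (+) a0 (+) a1 (+) g2 (a0 + a1)%N == a2' (+) a0' (+) a1' (+) g2 (a0' + a1')%N) ==>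
  [&& a0 == a0', a1 == a1' & a2 == a2'].

Lemma key o0 o1 o2 z0 z1 z2 a0 a1 a2 a0' a1' a2' : key_ok o0 o1 o2 z0 z1 z2 a0 a1 a2 a0' a1' a2'.
Proof. by case: o0; case: o1; case: o2; case: z0; case: z1; case: z2; case: a0; case: a1; case: a2; case: a0'; case: a1'; case: a2'. Qed.

Definition Ab (a : bool) : Zm := (a : nat)%:R.
Definition psi0 (z : Zm) : bool := odd z (+) (z == 0).
Definition psi1 (z : Zm) : bool := odd z.
Definition psi2 (z : Zm) : bool := z == 0.

Definition Hc (ps : Zm -> bool) (x y w : bool * Zm) : bool :=
  x.1 (+) y.1 (+) w.1 (+) ps (x.2 + (y.2 + Ab y.1) + (w.2 + Ab w.1)).
Definition Hd (x y w : bool * Zm) : Zm := x.2 + (y.2 + Ab y.1) - (w.2 + Ab w.1).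
Arguments Hc : simpl never.
Arguments Hd : simpl never.
Definition Hf (ps : Zm -> bool) (x y w : bool * Zm) : bool * Zm := (Hc ps x y w, Hd x y w).

Lemma Hf_eq ps x y w x' y' w' : Hf ps x y w = Hf ps x' y' w' ->
  Hc ps x y w = Hc ps x' y' w' /\ Hd x y w = Hd x' y' w'.
Proof. by move=> e; split; [exact: (congr1 fst e) | exact: (congr1 snd e)]. Qed.

Lemma Hf_latin ps : latin3 (Hf ps).
Proof.
split.
- move=> x x' y w; move/Hf_eq => [ec ed]; rewrite /Hc /Hd in ec ed.
  have e2 : x.2 = x'.2 by move: (addIr _ ed) => /addIr.
  rewrite e2 in ec.
  have e1 : x.1 = x'.1 by move/addIb/addIb/addIb: ec.
  by case: x x' e1 e2 {ec ed} => [? ?] [? ?] /= -> ->.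
- move=> x y y' w; move/Hf_eq => [ec ed]; rewrite /Hc /Hd in ec ed.
  have eY : y.2 + Ab y.1 = y'.2 + Ab y'.1 by move: (addIr _ ed) => /addrI.
  rewrite eY in ec.
  have e1 : y.1 = y'.1 by move/addIb/addIb/addbI: ec.
  rewrite e1 in eY; have e2 : y.2 = y'.2 by move/addIr: eY.
  by case: y y' e1 e2 {ec ed eY} => [? ?] [? ?] /= -> ->.
- move=> x y w w'; move/Hf_eq => [ec ed]; rewrite /Hc /Hd in ec ed.
  have eW : w.2 + Ab w.1 = w'.2 + Ab w'.1 by move: (addrI _ ed) => /oppr_inj.
  rewrite eW in ec.
  have e1 : w.1 = w'.1 by move/addIb/addbI: ec.
  rewrite e1 in eW; have e2 : w.2 = w'.2 by move/addIr: eW.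
  by case: w w' e1 e2 {ec ed eW} => [? ?] [? ?] /= -> ->.
Qed.

Lemma sel_psi (ps : Zm -> bool) (B : Zm) (a b : bool) :
  ps (B + Ab a + Ab b) = sel (a + b)%N (ps (B + 0%:R)) (ps (B + 1%:R)) (ps (B + 2%:R)).
Proof.
rewrite /Ab -addrA -natrD.
by case: a; case: b.
Qed.

Lemma facts (v0 v1 v2 : nat) :
  ((v1 == 0%N) && (v0 == p.+2)) || (v1 == v0.+1) ->
  ((v2 == 0%N) && (v1 == p.+2)) || (v2 == v1.+1) ->
  let o0 := odd v0 in let o1 := odd v1 in let o2 := odd v2 in
  let z0 := v0 == 0%N in let z1 := v1 == 0%N in let z2 := v2 == 0%N in
  [&& (z0 ==> ~~ o0), (z1 ==> ~~ o1), (z2 ==> ~~ o2),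
      (z1 ==> ~~ o0), (z2 ==> ~~ o1),
      (z1 || (o1 == ~~ o0)), (z2 || (o2 == ~~ o1)),
      ~~ (z0 && z1), ~~ (z1 && z2) & ~~ (z0 && z2)].
Proof.
have op : odd p = false by move: podd; rewrite /= !negbK => /negPf.
case/orP => [/andP [/eqP e1 /eqP e0] | /eqP e1];
case/orP => [/andP [/eqP e2 /eqP e1'] | /eqP e2].
- by rewrite e1 in e1'.
- by subst => /=; rewrite !negbK op.
- have e0 : v0 = p.+1 by rewrite e1 in e1'; case: e1'.
  by subst => /=; rewrite !negbK op.
- by subst; case: v0 => [|v0] /=; rewrite ?eqxx ?andbF ?andbT ?negbK.
Qed.

Definition F0 (x0 x1 x2 : bool * Zm) := Hf psi0 x0 x1 x2.
Definition F1 (x0 x1 x2 : bool * Zm) := Hf psi1 x1 x2 x0.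
Definition F2 (x0 x1 x2 : bool * Zm) := Hf psi2 x2 x0 x1.

Lemma pair_ext2 (A B : Type) (u v : A * B) : u.1 = v.1 -> u.2 = v.2 -> u = v.
Proof. by case: u v => ? ? [? ?] /= -> ->. Qed.

Lemma zval (y : Zm) : (y == 0) = (nat_of_ord y == 0%N).
Proof. by []. Qed.

Lemma tw_inj : inj3 F0 F1 F2.
Proof.
move=> x0 x1 x2 x0' x1' x2'.
rewrite /F0 /F1 /F2 => /Hf_eq [c0 d0] /Hf_eq [c1 d1] /Hf_eq [c2 d2].
rewrite /Hc /Hd in c0 d0 c1 d1 c2 d2.
have eB : x0.2 + x1.2 + x2.2 = x0'.2 + x1'.2 + x2'.2.
  transitivity ((x0.2 + (x1.2 + Ab x1.1) - (x2.2 + Ab x2.1)) +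
                (x1.2 + (x2.2 + Ab x2.1) - (x0.2 + Ab x0.1)) +
                (x2.2 + (x0.2 + Ab x0.1) - (x1.2 + Ab x1.1))); first by ring.
  by rewrite d0 d1 d2; ring.
set B := x0.2 + x1.2 + x2.2 in eB.
have s0 : x0.2 + (x1.2 + Ab x1.1) + (x2.2 + Ab x2.1) = B + Ab x1.1 + Ab x2.1 by rewrite /B; ring.
have s1 : x1.2 + (x2.2 + Ab x2.1) + (x0.2 + Ab x0.1) = B + Ab x2.1 + Ab x0.1 by rewrite /B; ring.
have s2 : x2.2 + (x0.2 + Ab x0.1) + (x1.2 + Ab x1.1) = B + Ab x0.1 + Ab x1.1 by rewrite /B; ring.
have s0' : x0'.2 + (x1'.2 + Ab x1'.1) + (x2'.2 + Ab x2'.1) = B + Ab x1'.1 + Ab x2'.1 by rewrite eB; ring.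
have s1' : x1'.2 + (x2'.2 + Ab x2'.1) + (x0'.2 + Ab x0'.1) = B + Ab x2'.1 + Ab x0'.1 by rewrite eB; ring.
have s2' : x2'.2 + (x0'.2 + Ab x0'.1) + (x1'.2 + Ab x1'.1) = B + Ab x0'.1 + Ab x1'.1 by rewrite eB; ring.
rewrite s0 s0' !sel_psi in c0.
rewrite s1 s1' !sel_psi in c1.
rewrite s2 s2' !sel_psi in c2.
have S0 := step (B + 0%:R).
rewrite (_ : B + 0%:R + 1 = B + 1%:R) in S0; last by ring.
have S1 := step (B + 1%:R).
rewrite (_ : B + 1%:R + 1 = B + 2%:R) in S1; last by ring.
have F := @facts _ _ _ S0 S1.
pose y0 : Zm := B + 0%:R. pose y1 : Zm := B + 1%:R. pose y2 : Zm := B + 2%:R.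
have K := key (odd y0) (odd y1) (odd y2)
              (B + 0%:R == 0) (B + 1%:R == 0) (B + 2%:R == 0)
              x0.1 x1.1 x2.1 x0'.1 x1'.1 x2'.1.
rewrite /key_ok !zval in K.
move: K => /implyP /(_ F) /implyP /(_ (introT eqP c0)) /implyP /(_ (introT eqP c1))
  /implyP /(_ (introT eqP c2)) /and3P [/eqP ea0 /eqP ea1 /eqP ea2].
rewrite -ea0 -ea1 -ea2 in d0 d1 d2.
have two : (2%:R : Zm) \is a GRing.unit by rewrite unitZpE // coprimen2.
have eb0 : 2%:R * x0.2 = 2%:R * x0'.2.
  transitivity ((x0.2 + (x1.2 + Ab x1.1) - (x2.2 + Ab x2.1)) +
                (x2.2 + (x0.2 + Ab x0.1) - (x1.2 + Ab x1.1)) - Ab x0.1 + Ab x2.1); first by ring.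
  by rewrite d0 d2; ring.
have eb1 : 2%:R * x1.2 = 2%:R * x1'.2.
  transitivity ((x0.2 + (x1.2 + Ab x1.1) - (x2.2 + Ab x2.1)) +
                (x1.2 + (x2.2 + Ab x2.1) - (x0.2 + Ab x0.1)) - Ab x1.1 + Ab x0.1); first by ring.
  by rewrite d0 d1; ring.
have eb2 : 2%:R * x2.2 = 2%:R * x2'.2.
  transitivity ((x1.2 + (x2.2 + Ab x2.1) - (x0.2 + Ab x0.1)) +
                (x2.2 + (x0.2 + Ab x0.1) - (x1.2 + Ab x1.1)) - Ab x2.1 + Ab x1.1); first by ring.
  by rewrite d1 d2; ring.
by split; apply: pair_ext2 => //; apply: (mulrI two).
Qed.

End Twisted.

Lemma latin3_rot1 {T : Type} (h : T -> T -> T -> T) :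
  latin3 h -> latin3 (fun a b c => h b c a).
Proof. by case=> h1 h2 h3; split=> ? ? ? ?; [exact: h3 | exact: h1 | exact: h2]. Qed.

Lemma latin3_rot2 {T : Type} (h : T -> T -> T -> T) :
  latin3 h -> latin3 (fun a b c => h c a b).
Proof. by case=> h1 h2 h3; split=> ? ? ? ?; [exact: h2 | exact: h3 | exact: h1]. Qed.

Lemma tw_exists p : odd p.+3 -> AONT_exists 2 3 (2 * p.+3).
Proof.
move=> podd.
have := @aont23 _ (F0 p) (F1 p) (F2 p) (Hf_latin p (psi0 p))
  (@latin3_rot1 _ _ (Hf_latin p (psi1 p))) (@latin3_rot2 _ _ (Hf_latin p (psi2 p))) (@tw_inj p podd).
by rewrite card_prod card_bool card_ord.
Qed.

Section Final.
Import GRing.Theory.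
Local Open Scope ring_scope.

Lemma zm_units m : (1 < m)%N -> odd m ->
  (-1 : 'Z_m) \is a GRing.unit /\ ((-1 : 'Z_m) - 1) \is a GRing.unit.
Proof.
move=> m1 mo; split; first exact: unitrN1.
by rewrite -opprD unitrN (_ : 1 + 1 = 2%:R) // unitZpE // coprimen2.
Qed.

Lemma lin_Zm m : (1 < m)%N -> odd m -> AONT_exists 2 3 m.
Proof.
move=> m1 mo; have [tU t1U] := @zm_units m m1 mo.
have [l0 l1 l2 hi] := @lin_aont _ _ tU t1U.
have := @aont23 'Z_m _ _ _ l0 l1 l2 hi.
by rewrite card_ord Zp_cast.
Qed.

Lemma field_t (F : finFieldType) : (2 < #|F|)%N -> exists t : F, t != 0 /\ t != 1.
Proof.
move=> h.
have : ~~ ([set: F] \subset [set 0; 1]).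
  apply/negP => /subset_leq_card; rewrite cardsT cards2 => H.
  have : (#|F| <= 2)%N by apply: (leq_trans H); case: (_ != _).
  by rewrite leqNgt h.
by case/subsetPn => t _; rewrite !inE negb_or => /andP [t0 t1]; exists t.
Qed.

Lemma lin_F (F : finFieldType) : (2 < #|F|)%N -> AONT_exists 2 3 #|F|.
Proof.
move=> /field_t [t [t0 t1]].
have tU : t \is a GRing.unit by rewrite unitfE.
have t1U : (t - 1) \is a GRing.unit by rewrite unitfE subr_eq0.
have [l0 l1 l2 hi] := @lin_aont _ _ tU t1U.
exact: (@aont23 F _ _ _ l0 l1 l2 hi).
Qed.

Lemma lin_FZ (F : finFieldType) m : (2 < #|F|)%N -> (1 < m)%N -> odd m ->
  AONT_exists 2 3 (#|F| * m).
Proof.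
move=> /field_t [t [t0 t1]] m1 mo.
have [sU s1U] := @zm_units m m1 mo.
pose u : (F * 'Z_m)%type := (t, -1).
have tU : u \is a GRing.unit by apply/andP; split; rewrite /= ?unitfE.
have t1U : (u - 1) \is a GRing.unit.
  by apply/andP; split; rewrite /= ?unitfE ?subr_eq0.
have [l0 l1 l2 hi] := @lin_aont _ _ tU t1U.
have := @aont23 (F * 'Z_m)%type _ _ _ l0 l1 l2 hi.
by rewrite card_prod card_ord Zp_cast.
Qed.

End Final.

Theorem corollary3p8 (n : nat) :
  0 < n -> n <> 2 -> n <> 6 -> AONT_exists 2 3 n /\ AONT_exists 1 3 n.
Proof.
move=> n0 n2 _.
suff h : AONT_exists 2 3 n by split => //; exact: aont_inv.
case: (@pfactor_coprime 2 n isT n0) => m cm En.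
move: En n2; move: (logn 2 n) => k -> n2.
have mo : odd m by rewrite -coprimen2 coprime_sym.
have m0 : 0 < m by case: m mo {cm n2}.
case: k n2 => [|k] n2.
  rewrite expn0 muln1 in n2 *.
  case: (ltngtP m 1) => [|m1|->]; first by rewrite ltnS leqn0 => /eqP e; rewrite e in m0.
  - exact: lin_Zm.
  - exact: aont_one.
case: k n2 => [|k] n2.
  rewrite expn1 in n2 *.
  case: (ltngtP m 1) => [|m1|e]; first by rewrite ltnS leqn0 => /eqP e; rewrite e in m0.
  - have m3 : 2 < m.
      by move: m1 mo; case: m {cm n2 m0} => [|[|[|m]]].
    have -> : m = (m - 3).+3 by rewrite -addn3 subnK.
    rewrite mulnC; apply: tw_exists.
    by rewrite -addn3 subnK.
  - by rewrite e in n2.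
have [F _ cF] := @pPrimePowerField 2 k.+2 isT isT.
have F2 : 2 < #|F| by rewrite cF (ltn_exp2l 1).
case: (ltngtP m 1) => [|m1|->]; first by rewrite ltnS leqn0 => /eqP e; rewrite e in m0.
- by rewrite mulnC -cF; apply: lin_FZ.
- by rewrite mul1n -cF; apply: lin_F.
Qed.
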